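(* Let $R$ be a commutative ring, let $n\ge 3$ be odd, $l\ge 1$, $m\ge 3$, and let $A\in R^{l\times n}$, $B\in R^{n\times m}$. Then: (i) if $m$ is odd, the product $AB$ can be computed using $n(lm+l+m-1)/2$ multiplications; (ii) if $m$ is even, the product $AB$ can be computed using $\big(n(lm+l+m-1)+l-1\big)/2$ multiplications.
   Context: ''The product can be computed using $k$ multiplications'' means: there are $k$ products, each a product of two linear forms with integer coefficients in the entries of $A$ and $B$ (the two factors may each involve entries of both $A$ and $B$; commutativity of $R$ may be used), such that every entry of $AB$ is an integer linear combination of these $k$ products, identically for all inputs $A,B$ over any commutative ring. Additions, subtractions and multiplications by integer constants are not counted. *)

(* Defs.v *)
From HB Require Import structures.
From mathcomp Require Import all_boot all_order all_algebra.
Set Implicit Arguments. Unset Strict Implicit. Unset Printing Implicit Defensive.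
Import GRing.Theory.
Local Open Scope ring_scope.

Definition linform (R : comPzRingType) (l n m : nat)
  (c : 'M[int]_(l, n) * 'M[int]_(n, m)) (A : 'M[R]_(l, n)) (B : 'M[R]_(n, m)) : R :=
  \sum_(i < l) \sum_(j < n) (c.1 i j)%:~R * A i j
  + \sum_(i < n) \sum_(j < m) (c.2 i j)%:~R * B i j.

(* The product of an l x n by an n x m matrix can be computed with k
   multiplications: there are k products of two integer linear forms in
   the entries of A and B such that every entry of AB is an integer linear
   combination of them, identically over every commutative ring. *)
Definition computable_with (l n m k : nat) : Prop :=
  exists (U V : 'I_k -> 'M[int]_(l, n) * 'M[int]_(n, m))
         (C : 'I_l -> 'I_m -> 'I_k -> int),
    forall (R : comPzRingType) (A : 'M[R]_(l, n)) (B : 'M[R]_(n, m))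
           (i : 'I_l) (j : 'I_m),
      (A *m B) i j =
      \sum_(t < k) (C i j t)%:~R * (linform (U t) A B * linform (V t) A B).

(* Main.v *)
Require Import Defs.
From HB Require Import structures.
From mathcomp Require Import all_boot all_order all_algebra.
From mathcomp Require Import ring zify.
Set Implicit Arguments. Unset Strict Implicit. Unset Printing Implicit Defensive.
Import GRing.Theory.
Local Open Scope ring_scope.

Section Forms.
Variables (l n m : nat).
Definition lform := ('M[int]_(l, n) * 'M[int]_(n, m))%type.
Definition fadd (x y : lform) : lform := (x.1 + y.1, x.2 + y.2).
Definition fopp (x : lform) : lform := (- x.1, - x.2).
Definition fzero : lform := (0, 0).
Definition fa (i k : nat) : lform :=
  (\matrix_(i', k') (((i' == i :> nat) && (k' == k :> nat))%:R : int), 0).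
Definition fb (k j : nat) : lform :=
  (0, \matrix_(k', j') (((k' == k :> nat) && (j' == j :> nat))%:R : int)).

Variables (R : comPzRingType) (A : 'M[R]_(l, n)) (B : 'M[R]_(n, m)).

Lemma lfD x y : linform (fadd x y) A B = linform x A B + linform y A B.
Proof.
rewrite /linform /= addrACA; congr (_ + _);
  rewrite -big_split; apply: eq_bigr => i _; rewrite -big_split /=;
  apply: eq_bigr => j _; rewrite !mxE intrD mulrDl //.
Qed.

Lemma lfN x : linform (fopp x) A B = - linform x A B.
Proof.
rewrite /linform /= opprD -!sumrN; congr (_ + _); apply: eq_bigr => i _;
  rewrite -sumrN; apply: eq_bigr => j _; rewrite !mxE intrN mulNr //.
Qed.

Lemma lf0 : linform fzero A B = 0.
Proof.
rewrite /linform /= !big1 ?addr0 // => i _; rewrite big1 // => j _;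
  rewrite mxE mul0r //.
Qed.

Lemma lfa (i : 'I_l) (k : 'I_n) : linform (fa i k) A B = A i k.
Proof.
rewrite /linform /=.
rewrite [X in _ + X]big1 ?addr0; last first.
  by move=> a _; rewrite big1 // => b _; rewrite mxE mul0r.
rewrite (bigD1 i) //= (bigD1 k) //= !mxE !eqxx /= mul1r.
rewrite big1 ?addr0; last first.
  by move=> b Hb; rewrite mxE eqxx /=; move: Hb; rewrite -val_eqE /= => /negbTE ->; rewrite mul0r.
rewrite big1 ?addr0 // => a Ha; move: Ha; rewrite -val_eqE /= => /negbTE Ha; rewrite big1 // => b _.
by rewrite mxE Ha /= mul0r.
Qed.

Lemma lfb (k : 'I_n) (j : 'I_m) : linform (fb k j) A B = B k j.
Proof.
rewrite /linform /=.
rewrite [X in X + _]big1 ?add0r; last first.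
  by move=> a _; rewrite big1 // => b _; rewrite mxE mul0r.
rewrite (bigD1 k) //= (bigD1 j) //= !mxE !eqxx /= mul1r.
rewrite big1 ?addr0; last first.
  by move=> b Hb; rewrite mxE eqxx /=; move: Hb; rewrite -val_eqE /= => /negbTE ->; rewrite mul0r.
rewrite big1 ?addr0 // => a Ha; move: Ha; rewrite -val_eqE /= => /negbTE Ha; rewrite big1 // => b _.
by rewrite mxE Ha /= mul0r.
Qed.
End Forms.
Arguments fzero {l n m}.
Arguments fa {l n m}.
Arguments fb {l n m}.

Definition cw (l n m : nat) (I : finType) : Prop :=
  exists (U V : I -> lform l n m) (C : 'I_l -> 'I_m -> I -> int),
    forall (R : comPzRingType) (A : 'M[R]_(l, n)) (B : 'M[R]_(n, m)) i j,
      (A *m B) i j = \sum_(t : I) (C i j t)%:~R * (linform (U t) A B * linform (V t) A B).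
Definition cwk l n m k := exists I : finType, (#|I| <= k)%N /\ cw l n m I.

Lemma cwk_computable l n m k : cwk l n m k -> computable_with l n m k.
Proof.
case=> I [Hk [U [V [C H]]]].
pose h (t : nat) : option I := omap enum_val (insub t : option 'I_#|I|).
exists (fun t => oapp U fzero (h t)), (fun t => oapp V fzero (h t)),
  (fun i j t => oapp (C i j) 0 (h t)).
move=> R A B i j; rewrite H (big_enum_val (A := I)) /=.
pose G (x : I) := (C i j x)%:~R * (linform (U x) A B * linform (V x) A B).
pose F (t : nat) := oapp G 0 (h t).
transitivity (\sum_(t < #|I|) F t).
  by apply: eq_bigr => t _; rewrite /F /h valK.
rewrite (big_ord_widen k F Hk) big_mkcond /=.
apply: eq_bigr => t _; rewrite /F /h.
case: insubP => [u Hu Hv|Hn] /=; first by rewrite Hu.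
by rewrite (negbTE Hn) mul0r.
Qed.

Lemma cwk_le l n m k k' : cwk l n m k -> (k <= k')%N -> cwk l n m k'.
Proof. by case=> I [Hk H] Hk'; exists I; split => //; apply: leq_trans Hk Hk'. Qed.

Section Emb.
Variables (l n1 n2 m : nat).
Definition emb1 (c : lform l n1 m) : lform l (n1 + n2) m := (row_mx c.1 0, col_mx c.2 0).
Definition emb2 (c : lform l n2 m) : lform l (n1 + n2) m := (row_mx 0 c.1, col_mx 0 c.2).
Variables (R : comPzRingType) (A : 'M[R]_(l, n1 + n2)) (B : 'M[R]_(n1 + n2, m)).
Lemma lf_emb1 c : linform (emb1 c) A B = linform c (lsubmx A) (usubmx B).
Proof.
rewrite /linform /=; congr (_ + _).
  apply: eq_bigr => i _; rewrite big_split_ord /= [X in _ + X]big1 ?addr0.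
    by apply: eq_bigr => j _; rewrite row_mxEl mxE.
  by move=> j _; rewrite row_mxEr mxE mul0r.
rewrite big_split_ord /= [X in _ + X]big1 ?addr0.
  by apply: eq_bigr => i _; apply: eq_bigr => j _; rewrite col_mxEu mxE.
by move=> i _; rewrite big1 // => j _; rewrite col_mxEd mxE mul0r.
Qed.
Lemma lf_emb2 c : linform (emb2 c) A B = linform c (rsubmx A) (dsubmx B).
Proof.
rewrite /linform /=; congr (_ + _).
  apply: eq_bigr => i _; rewrite big_split_ord /= [X in X + _]big1 ?add0r.
    by apply: eq_bigr => j _; rewrite row_mxEr mxE.
  by move=> j _; rewrite row_mxEl mxE mul0r.
rewrite big_split_ord /= [X in X + _]big1 ?add0r.
  by apply: eq_bigr => i _; apply: eq_bigr => j _; rewrite col_mxEd mxE.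
by move=> i _; rewrite big1 // => j _; rewrite col_mxEu mxE mul0r.
Qed.
End Emb.

Lemma cwk_add l n1 n2 m k1 k2 :
  cwk l n1 m k1 -> cwk l n2 m k2 -> cwk l (n1 + n2) m (k1 + k2).
Proof.
case=> I1 [Hk1 [U1 [V1 [C1 H1]]]]; case=> I2 [Hk2 [U2 [V2 [C2 H2]]]].
exists (I1 + I2)%type; split; first by rewrite card_sum leq_add.
exists (fun t => match t with inl x => emb1 n2 (U1 x) | inr y => emb2 n1 (U2 y) end).
exists (fun t => match t with inl x => emb1 n2 (V1 x) | inr y => emb2 n1 (V2 y) end).
exists (fun i j t => match t with inl x => C1 i j x | inr y => C2 i j y end).
move=> R A B i j.
rewrite -{1}(hsubmxK A) -{1}(vsubmxK B) mul_row_col mxE H1 H2 big_sumType /=.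
by congr (_ + _); apply: eq_bigr => t _; rewrite ?lf_emb1 ?lf_emb2.
Qed.

Definition coef (s : int) (b : bool) : int := if b then s else 0.

Lemma sum_sel (R : comPzRingType) (I : finType) (P : pred I) (x : I) (s : int) (F : I -> R) :
  (forall t, P t = (t == x)) -> \sum_(t : I) (coef s (P t))%:~R * F t = s%:~R * F x.
Proof.
move=> HP; rewrite (bigD1 x) //= HP eqxx big1 ?addr0 // => t Ht.
by rewrite HP (negbTE Ht) /= mul0r.
Qed.

Lemma sum_none (R : comPzRingType) (I : finType) (P : pred I) (s : int) (F : I -> R) :
  (forall t, P t = false) -> \sum_(t : I) (coef s (P t))%:~R * F t = 0.
Proof. by move=> HP; rewrite big1 // => t _; rewrite HP mul0r. Qed.

Lemma mulE l n m (R : comPzRingType) (A : 'M[R]_(l, n)) (B : 'M[R]_(n, m)) i j :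
  (A *m B) i j = \sum_(k < n) linform (fa i k) A B * linform (fb k j) A B.
Proof. by rewrite mxE; apply: eq_bigr => k _; rewrite lfa lfb. Qed.

Section Pair.
Variables (l m : nat).
Notation F := (lform l 2 m).
Definition pT := ('I_l * 'I_m + 'I_l + 'I_m.-1)%type.
Definition pU (t : pT) : F := match t with
 | inl (inl p) => fadd (fadd (fa p.1 0) (fb 1 p.2)) (fopp (fb 1 0))
 | inl (inr i) => fadd (fa i 0) (fopp (fb 1 0))
 | inr s => fadd (fb 1 s.+1) (fopp (fb 1 0)) end.
Definition pV (t : pT) : F := match t with
 | inl (inl p) => fadd (fa p.1 1) (fb 0 p.2)
 | inl (inr i) => fa i 1
 | inr s => fb 0 s.+1 end.
Definition pC (i : 'I_l) (j : 'I_m) (t : pT) : int := match t with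
 | inl (inl p) => coef 1 (p == (i, j))
 | inl (inr i') => coef (-1) (i' == i)
 | inr s => coef (-1) (s.+1 == j :> nat) end.

Lemma pair_cw : (0 < m)%N -> cw l 2 m pT.
Proof.
move=> m0; exists pU, pV, pC => R A B i j.
rewrite mulE !big_ord_recr big_ord0 /= add0r !big_sumType /=.
rewrite (sum_sel (x := (i, j))) // (sum_sel (x := i)) //.
case: (posnP j) => [j0|jpos].
  rewrite sum_none; last by move=> t; rewrite j0.
  rewrite /= !lfD !lfN j0. ring.
have Hs : (j.-1 < m.-1)%N by move: (ltn_ord j) jpos; lia.
rewrite (sum_sel (x := Ordinal Hs)); last first.
  by move=> t; apply/eqP/eqP => [H|->] /=; [apply: val_inj => /=; rewrite -H | rewrite prednK].
rewrite /= !lfD !lfN prednK //. ring.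
Qed.
End Pair.

Lemma half_bounds x : (x./2 * 2 <= x <= x./2 * 2 + 1)%N.
Proof. rewrite -{2 4}(odd_double_half x); case: (odd x) => /=; lia. Qed.

Lemma halfS2 s : ((s.*2.+1)./2 = s)%N.
Proof. by rewrite /= uphalf_double. Qed.

Section Triple.
Variables (l m : nat).
Notation F := (lform l 3 m).
Definition bY : F := fadd (fb 0 2) (fopp (fb 2 2)).
Definition bZ : F := fadd (fb 1 0) (fopp (fb 0 0)).
Definition bX (s : nat) : F := fadd (fb 2 s.*2.+1) (fopp (fb 1 s.*2.+1)).
Definition dX (s : nat) : F :=
  if (s.*2.+2 < m)%N then fadd (fadd (fb 2 s.*2.+2) (fopp (fb 0 s.*2.+2))) bY else fzero.
Definition bJ (j : nat) : F :=
  if j == 0%N then fb 1 0 else if odd j then fb 2 j else fadd (fb 2 j) bY.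
Definition dJ (j : nat) : F :=
  if j == 0%N then fadd (fb 2 0) bY else if odd j then fadd (fadd (fb 0 j) (dX j./2)) bZ
  else fadd (fb 1 j) (bX (j.-1)./2).
Definition qU (i j : nat) : F :=
  if j == 0%N then fadd (fa i 2) (bJ j) else if odd j then fadd (fa i 0) (bJ j)
  else fadd (fa i 1) (bJ j).
Definition qV (i j : nat) : F :=
  if j == 0%N then fadd (fadd (fa i 0) (fa i 1)) (dJ j)
  else if odd j then fadd (fadd (fa i 1) (fa i 2)) (dJ j)
  else fadd (fadd (fa i 2) (fa i 0)) (dJ j).

Definition tT := (('I_l * 'I_m + 'I_l + 'I_l + 'I_l * 'I_(m./2)) + 'I_m + 'I_((m - 3)./2))%type.
Definition tU (t : tT) : F := match t with
 | inl (inl (inl (inl (inl p)))) => qU p.1 p.2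
 | inl (inl (inl (inl (inr i)))) => fadd (fa i 1) bY
 | inl (inl (inl (inr i))) => fadd (fa i 2) bZ
 | inl (inl (inr p)) => fadd (fa p.1 0) (bX p.2)
 | inl (inr j) => bJ j
 | inr s => bX s.+1 end.
Definition tV (t : tT) : F := match t with
 | inl (inl (inl (inl (inl p)))) => qV p.1 p.2
 | inl (inl (inl (inl (inr i)))) => fa i 2
 | inl (inl (inl (inr i))) => fa i 0
 | inl (inl (inr p)) => fadd (fa p.1 1) (dX p.2)
 | inl (inr j) => dJ j
 | inr s => dX s.+1 end.
Definition tC (i : 'I_l) (j : 'I_m) (t : tT) : int := match t with
 | inl (inl (inl (inl (inl p)))) => coef 1 (p == (i, j))
 | inl (inl (inl (inl (inr i')))) => coef (-1) ((i' == i) && ~~ odd j)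
 | inl (inl (inl (inr i')))  => coef (-1) ((i' == i) && ((j == 0 :> nat) || odd j))
 | inl (inl (inr p)) => coef (-1) [&& p.1 == i, (0 < j)%N & (p.2 == (j.-1)./2 :> nat)]
 | inl (inr j') => coef (-1) (j' == j)
 | inr s => coef 1 ((0 < j)%N && (s.+1 == (j.-1)./2 :> nat)) end.

Lemma triple_cw : (3 <= m)%N -> cw l 3 m tT.
Proof.
move=> m3; exists tU, tV, tC => R A B i j.
rewrite mulE !big_ord_recr big_ord0 /= add0r !big_sumType /=.
rewrite (sum_sel (x := (i, j))) // (sum_sel (x := j)) //.
have hm := half_bounds m; have hm3 := half_bounds (m - 3).
have jm := ltn_ord j.
case: (posnP j) => [j0|jpos].
  rewrite (sum_sel (x := i)); last by move=> t; rewrite j0 andbT.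
  rewrite (sum_sel (x := i)); last by move=> t; rewrite j0 andbT.
  rewrite sum_none; last by move=> t; rewrite j0 /= andbF.
  rewrite sum_none; last by move=> t; rewrite j0.
  rewrite /qU /qV /bJ /dJ /bY /bZ j0 /= !lfD !lfN. ring.
case Ho: (odd j).
  have [s Hj] : exists s, nat_of_ord j = s.*2.+1.
    by exists j./2; rewrite -{1}(odd_double_half j) Ho add1n.
  have Ej : ((j.-1)./2 = s)%N by rewrite Hj /= doubleK.
  have Hs : (s < m./2)%N by lia.
  rewrite sum_none; last by move=> t /=; rewrite andbF.
  rewrite (sum_sel (x := i)); last by move=> t /=; rewrite andbT.
  rewrite (sum_sel (x := (i, Ordinal Hs))); last first.
    by case=> i' s'; rewrite xpair_eqE -val_eqE /= Ej.
  case: (boolP ((0 < s)%N && (s.*2.+2 < m)%N)) => [/andP [s0 sm]|hns].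
    have Hs' : (s.-1 < (m - 3)./2)%N by lia.
    rewrite (sum_sel (x := Ordinal Hs')); last first.
      by move=> t; rewrite Ej /= -val_eqE /=; apply/eqP/eqP; lia.
    rewrite /= prednK // /qU /qV /bJ /dJ Hj /= odd_double /= ?uphalf_double ?halfS2 /bX /bY /bZ !lfD !lfN.
    ring.
  rewrite sum_none; last first.
    move=> t; rewrite Ej /=; apply/negbTE/eqP => E; move: hns (ltn_ord t); rewrite -E /=.
    lia.
  have Z0 : linform (dX s) A B = 0.
    case: (posnP s) => [->|s0]; first by rewrite /dX /= m3 /bY !lfD !lfN; ring.
    by rewrite /dX ifF ?lf0 //; apply/negbTE; move: hns; rewrite s0.
  rewrite /qU /qV /bJ /dJ Hj /= odd_double /= ?uphalf_double ?halfS2 /bX /bY /bZ !lfD !lfN Z0.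
  ring.
have [s Hj] : exists s, nat_of_ord j = s.*2.+2.
  exists j./2.-1; have := odd_double_half j; rewrite Ho /=; lia.
have Ej : ((j.-1)./2 = s)%N by rewrite Hj /= uphalf_double.
have Hs : (s < m./2)%N by lia.
have sm : (s.*2.+2 < m)%N by lia.
rewrite (sum_sel (x := i)); last by move=> t /=; rewrite andbT.
rewrite sum_none; last by move=> t /=; rewrite andbF.
rewrite (sum_sel (x := (i, Ordinal Hs))); last first.
  by case=> i' s'; rewrite xpair_eqE -val_eqE /= Ej.
have Hd : linform (dX s) A B = linform (fadd (fadd (fb 2 s.*2.+2) (fopp (fb 0 s.*2.+2))) bY) A B.
  by rewrite /dX sm.
case: (posnP s) => [s0|s0].
  rewrite sum_none; last by move=> t; rewrite Ej s0.
  rewrite /= /qU /qV /bJ /dJ Hj /= negbK odd_double /= ?uphalf_double ?halfS2 !lfD !lfN Hd ?lfD ?lfN s0 /= /bX /bY /bZ ?lfD ?lfN.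
  ring.
have Hs' : (s.-1 < (m - 3)./2)%N by lia.
rewrite (sum_sel (x := Ordinal Hs')); last first.
  by move=> t; rewrite Ej /= -val_eqE /=; apply/eqP/eqP; lia.
rewrite /= prednK // /qU /qV /bJ /dJ Hj /= negbK odd_double /= ?uphalf_double ?halfS2 !lfD !lfN Hd /bX /bY /bZ !lfD !lfN.
ring.
Qed.
End Triple.

Lemma pair_cwk l m : (0 < m)%N -> cwk l 2 m (l * m + l + m.-1).
Proof.
move=> m0; exists (pT l m); split; last exact: pair_cw.
by rewrite /pT !card_sum card_prod !card_ord.
Qed.

Lemma triple_cwk l m : (3 <= m)%N ->
  cwk l 3 m (l * m + l + l + l * m./2 + m + (m - 3)./2).
Proof.
move=> m3; exists (tT l m); split; last exact: triple_cw.
by rewrite /tT !card_sum !card_prod !card_ord.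
Qed.

Lemma chain l m p : (3 <= m)%N ->
  cwk l (3 + p * 2) m ((l * m + l + l + l * m./2 + m + (m - 3)./2) + p * (l * m + l + m.-1)).
Proof.
move=> m3; elim: p => [|p IH]; first by rewrite !mul0n !addn0; exact: triple_cwk.
have -> : (3 + p.+1 * 2 = (3 + p * 2) + 2)%N by lia.
apply: cwk_le (cwk_add IH (pair_cwk l (ltnW (ltnW m3)))) _.
lia.
Qed.

Close Scope ring_scope.

Theorem mainTheorem6 (n l m : nat) :
  odd n -> (3 <= n)%N -> (1 <= l)%N -> (3 <= m)%N ->
  (odd m -> computable_with l n m (n * (l * m + l + m - 1) %/ 2)) /\
  (~~ odd m -> computable_with l n m ((n * (l * m + l + m - 1) + l - 1) %/ 2)).
Proof.
move=> On n3 l1 m3.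
have [p Hn] : exists p, n = (3 + p * 2)%N.
  exists (n./2).-1; have := odd_double_half n; rewrite On /=; lia.
subst n.
split => Om; apply: cwk_computable; apply: cwk_le (chain l p m3) _.
- have [q Hm] : exists q, m = (q * 2 + 1)%N.
    by exists m./2; have := odd_double_half m; rewrite Om /=; lia.
  have h1 : m./2 = q.
    have e : (q * 2 + 1 = q.*2.+1)%N by lia.
    by rewrite Hm e halfS2.
  have h2 : ((m - 3)./2 = q.-1)%N.
    have -> : (m - 3 = (q.-1).*2)%N by lia.
    by rewrite doubleK.
  rewrite h1 h2.
  have E : ((3 + p * 2) * (l * m + l + m - 1) =
    ((l * m + l + l + l * q + m + q.-1) + p * (l * m + l + m.-1)) * 2)%N.
    clear -Hm m3 l1; subst m; case: q m3 => [|r] m3; first lia.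
    case: l l1 => [|l'] l1; first lia.
    clear; lia.
  by rewrite E mulnK.
- have [q Hm] : exists q, m = (q * 2 + 2)%N.
    exists (m./2).-1; have := odd_double_half m; rewrite (negbTE Om) /=; lia.
  have h1 : m./2 = q.+1.
    by rewrite Hm (_ : (q * 2 + 2 = q.+1.*2)%N) ?doubleK //; lia.
  have h2 : ((m - 3)./2 = q.-1)%N.
    have -> : (m - 3 = (q.-1).*2.+1)%N by lia.
    by rewrite /= uphalf_double.
  rewrite h1 h2.
  have E : ((3 + p * 2) * (l * m + l + m - 1) + l - 1 =
    ((l * m + l + l + l * q.+1 + m + q.-1) + p * (l * m + l + m.-1)) * 2)%N.
    clear -Hm m3 l1; subst m; case: q m3 => [|r] m3; first lia.
    case: l l1 => [|l'] l1; first lia.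
    clear; lia.
  by rewrite E mulnK.
Qed.
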